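(* Suppose $L_1$ is any linear order isomorphic to a suborder of $U$ and $L_2$ is a countable linear order isomorphic to a suborder of $U$. Then $L_1\cdot_\omega L_2\cong 1$.
   Context: The countable condensation $\sim_\omega$ on a linear order $L$: $x\sim_\omega y$ iff the closed interval between $x$ and $y$ is countable; $L/\!\sim_\omega$ is the linear order of its classes. $L_1L_2$ is the lexicographic product (each element of $L_1$ replaced by a copy of $L_2$), and $L_1\cdot_\omega L_2$ is the order type of $L_1L_2/\!\sim_\omega$. $U$ is the linear order $R^*+\mathbb{Q}+R$, where $R$ is obtained from $\omega_1$ by replacing each $\alpha<\omega_1$ with a point $u_\alpha$ followed by a copy of the rationals, $R^*$ is the reverse of $R$, and the middle summand is a copy of the rationals. *)

(* Defs.v *)
From mathcomp Require Import all_boot all_order all_algebra.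
Unset Printing Implicit Defensive.
Import Order.TTheory GRing.Theory Num.Theory.

Record ord := Ord { car :> Type; rel : car -> car -> Prop }.
Arguments rel : clear implicits.
Arguments Ord : clear implicits.

Definition ole {L : ord} (x y : L) : Prop := rel L x y \/ x = y.

Definition linear_order (L : ord) : Prop :=
  (forall x : L, ~ rel L x x) /\
  (forall x y z : L, rel L x y -> rel L y z -> rel L x z) /\
  (forall x y : L, rel L x y \/ x = y \/ rel L y x).

Definition countable_set {T : Type} (S : T -> Prop) : Prop :=
  exists f : T -> nat, forall x y, S x -> S y -> f x = f y -> x = y.
Definition countable_type (T : Type) : Prop := countable_set (fun _ : T => True).

Definition embeds (L M : ord) : Prop :=
  exists f : L -> M, (forall x y, f x = f y -> x = y) /\
                     (forall x y, rel L x y <-> rel M (f x) (f y)).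
Definition iso (L M : ord) : Prop :=
  exists f : L -> M, (forall x y, f x = f y -> x = y) /\
                     (forall z, exists x, f x = z) /\
                     (forall x y, rel L x y <-> rel M (f x) (f y)).

Definition One : ord := Ord _ (fun _ _ : unit => False).
Definition Qord : ord := Ord _ (fun x y : rat => (x < y)%R).
Definition orev (L : ord) : ord := Ord _ (fun x y : L => rel L y x).
Definition osum (A B : ord) : ord :=
  Ord _ (fun x y : A + B => match x, y with
                          | inl a, inl a' => rel A a a'
                          | inr b, inr b' => rel B b b'
                          | inl _, inr _ => True
                          | inr _, inl _ => False end).
(* Lexicographic product L1 L2: each element of L1 replaced by a copy of L2. *)
Definition oprod (A B : ord) : ord :=
  Ord _ (fun x y : A * B => rel A x.1 y.1 \/ (x.1 = y.1 /\ rel B x.2 y.2)).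

(* [W] is (isomorphic to) omega_1: an uncountable well-order all of whose
   proper initial segments are countable. *)
Definition is_omega1 (W : ord) : Prop :=
  linear_order W /\ well_founded (rel W) /\ ~ countable_type W /\
  (forall a : W, countable_set (fun b => rel W b a)).

(* R: each alpha < omega_1 replaced by a point u_alpha followed by a copy of Q. *)
Definition Rord (W : ord) : ord := oprod W (osum One Qord).
Definition Uord (W : ord) : ord := osum (osum (orev (Rord W)) Qord) (Rord W).

Definition sim_omega {L : ord} (x y : L) : Prop :=
  countable_set (fun z => (ole x z /\ ole z y) \/ (ole y z /\ ole z x)).

Definition cond (L : ord) : ord :=
  Ord _ (fun P Q : {P : L -> Prop | exists x, P = sim_omega x} =>
         proj1_sig P <> proj1_sig Q /\
         exists x y, proj1_sig P x /\ proj1_sig Q y /\ rel L x y).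

Definition omega_mul (L1 L2 : ord) : ord := cond (oprod L1 L2).

(* Main.v *)
Require Import Defs.
From mathcomp Require Import all_boot all_algebra.
From Stdlib Require Import ClassicalEpsilon FunctionalExtensionality PropExtensionality ProofIrrelevance.

Lemma pick_inj (T : countType) (x y : T) : pickle x = pickle y -> x = y.
Proof. exact: (pcan_inj (@pickleK T)). Qed.

Lemma cnt_sub {T : Type} (A B : T -> Prop) :
  countable_set B -> (forall x, A x -> B x) -> countable_set A.
Proof. move=> [f Hf] H; exists f => x y Ax Ay; exact: Hf (H _ Ax) (H _ Ay). Qed.

Lemma cnt_union {T : Type} (A B : T -> Prop) :
  countable_set A -> countable_set B -> countable_set (fun x => A x \/ B x).
Proof.
move=> [f Hf] [g Hg].
exists (fun x => if excluded_middle_informative (A x) then pickle (inl (f x) : nat + nat)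
                 else pickle (inr (g x) : nat + nat)) => x y Hx Hy.
case: excluded_middle_informative => ax; case: excluded_middle_informative => ay
  => /pick_inj // [] E.
- exact: Hf.
- apply: Hg => //; [case: Hx | case: Hy] => //.
Qed.

Lemma cnt_eq {T : Type} (m : T) : countable_set (fun x => x = m).
Proof. exists (fun _ => 0) => x y -> -> //. Qed.

Lemma cnt_false {T : Type} : countable_set (fun _ : T => False).
Proof. exists (fun _ => 0) => x y []. Qed.

Section U.
Variable W : ord.

Definition wb (u : Uord W) (w : W) : Prop :=
  match u with
  | inl (inl (w', _)) => ole w w'
  | inl (inr _) => False
  | inr (w', _) => ole w w'
  end.

Definition good (P : W -> Prop) (z : Uord W) : Prop :=
  match z with
  | inl (inl (w, _)) => P w
  | inl (inr _) => True
  | inr (w, _) => P w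
  end.

Lemma good_cnt (P : W -> Prop) : countable_set P -> countable_set (good P).
Proof.
move=> [f Hf].
exists (fun z : Uord W => pickle (match z with
   | inl (inl (w, s)) => inl (inl (f w, s))
   | inl (inr q) => inl (inr q)
   | inr (w, s) => inr (f w, s) end
   : ((nat * (unit + rat)) + rat) + (nat * (unit + rat)))).
move=> [[[w s]|q]|[w s]] [[[w' s']|q']|[w' s']] /= H1 H2 /pick_inj // [].
- by move=> /(Hf _ _ H1 H2) -> ->.
- by move=> ->.
- by move=> /(Hf _ _ H1 H2) -> ->.
Qed.

Lemma wb_cnt (HW : is_omega1 W) (u : Uord W) : countable_set (wb u).
Proof.
case: u => [[[w' s]|q]|[w' s]] /=; try exact: cnt_false;
  (apply: cnt_union; [exact: HW.2.2.2 | exact: cnt_eq]).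
Qed.

Lemma between_good (u z v : Uord W) :
  ole u z -> ole z v -> good (fun w => wb u w \/ wb v w) z.
Proof.
case: z => [[[w s]|q]|[w s]] /= Huz Hzv //.
- left; case: Huz => [|->]; last by right.
  case: u => [[[w' s']|q']|[w' s']] //= [H|[H _]]; [by left | by right].
- right; case: Hzv => [|<-]; last by right.
  case: v => [[[w' s']|q']|[w' s']] //= [H|[H _]]; [by left | by right].
Qed.

End U.

Definition interval {L : ord} (x y : L) (z : L) : Prop :=
  (ole x z /\ ole z y) \/ (ole y z /\ ole z x).

Lemma U_interval (W : ord) (HW : is_omega1 W) (u v : Uord W) :
  countable_set (interval u v).
Proof.
refine (@cnt_sub _ (interval u v) (good W (fun w => wb W u w \/ wb W v w)) _ _).
  apply: good_cnt; apply: cnt_union; exact: wb_cnt.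
move=> z [[H1 H2]|[H1 H2]]; first exact: (between_good W u z v H1 H2).
have := between_good W v z u H1 H2.
case: z {H1 H2} => [[[w s]|q]|[w s]] /=; tauto.
Qed.

Lemma L1_interval (W : ord) (HW : is_omega1 W) (L : ord) (e : embeds L (Uord W))
  (a b : L) : countable_set (interval a b).
Proof.
case: e => f [fi fr].
have [g Hg] := U_interval W HW (f a) (f b).
have ho : forall x y, ole x y -> ole (f x) (f y).
  by move=> x y [H|->]; [left; apply/fr | right].
exists (fun c => g (f c)) => x y Hx Hy E.
apply: fi; apply: Hg E.
- by case: Hx => [[]|[]] H1 H2; [left|right]; split; apply: ho.
- by case: Hy => [[]|[]] H1 H2; [left|right]; split; apply: ho.
Qed.

Lemma all_sim (W : ord) (HW : is_omega1 W) (L1 L2 : ord)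
  (e1 : embeds L1 (Uord W)) (c2 : countable_type L2) (x y : oprod L1 L2) :
  sim_omega x y.
Proof.
have [g Hg] := L1_interval W HW L1 e1 x.1 y.1.
case: c2 => h Hh.
have ho : forall p q : oprod L1 L2, ole p q -> ole p.1 q.1.
  by move=> p q [[H|[H _]]|->]; [left|right|right].
exists (fun p : oprod L1 L2 => pickle (g p.1, h p.2)) => p q Hp Hq /pick_inj [] E1 E2.
have Ip : interval x.1 y.1 p.1.
  by case: Hp => [[]|[]] H1 H2; [left|right]; split; apply: ho.
have Iq : interval x.1 y.1 q.1.
  by case: Hq => [[]|[]] H1 H2; [left|right]; split; apply: ho.
move: (Hg _ _ Ip Iq E1) (Hh _ _ I I E2).
move=> A B; exact: injective_projections.
Qed.

Theorem lemma5p3 (W : ord) (HW : is_omega1 W) (L1 L2 : ord)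
  (lin1 : linear_order L1) (lin2 : linear_order L2)
  (ne1 : inhabited (car L1)) (ne2 : inhabited (car L2))
  (e1 : embeds L1 (Uord W)) (e2 : embeds L2 (Uord W))
  (c2 : countable_type L2) :
  iso (omega_mul L1 L2) One.
Proof.
have Hall : forall x : oprod L1 L2, sim_omega x = fun _ => True.
  move=> x; apply: functional_extensionality => y.
  apply: propositional_extensionality; split => // _; exact: (all_sim W HW L1 L2 e1 c2 x y).
have Heq : forall P Q : omega_mul L1 L2, proj1_sig P = proj1_sig Q.
  move=> [p [x Hx]] [q [y Hy]] /=; by rewrite Hx Hy !Hall.
exists (fun _ => tt); split; [|split].
- move=> [p Hp] [q Hq] _.
  have E : p = q by exact: (Heq (exist _ p Hp) (exist _ q Hq)).
  subst q; f_equal; apply: proof_irrelevance.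
- case; case: ne1 => a; case: ne2 => b.
  by exists (exist _ (@sim_omega (oprod L1 L2) (a, b)) (ex_intro _ (a, b) erefl)).
- move=> P Q; split => //= [[H _]]; exact: H (Heq P Q).
Qed.
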